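(* Let $\mathcal{P}:=\bigl\{t^n-\sum_{i\in M}t^i: n\ge1,\ 0\in M\subseteq\{j\in\mathbb{N}: j\le\frac{n-1}{2}\}\bigr\}$. Then: (1) for every $n\ge1$, the polynomial $t^n-\sum_{i=0}^{\lfloor(n-1)/2\rfloor}t^i$ has the largest positive root among all polynomials of degree $n$ in $\mathcal{P}$; (2) the polynomials $t^3-t-1$ and $t^5-t^2-t-1=(t^2+1)(t^3-t-1)$ have the largest positive roots among all polynomials in $\mathcal{P}$; i.e. every polynomial in $\mathcal{P}$ has all its positive roots $\le t_P$, where $t_P\approx1.324718$ is the unique real root of $t^3-t-1$.
   Context: Each polynomial in $\mathcal{P}$ takes value $-1$ at $0$ and has a positive root. *)

(* Defs.v *)
From HB Require Import structures.
From mathcomp Require Import all_boot all_order all_algebra.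
Set Implicit Arguments. Unset Strict Implicit. Unset Printing Implicit Defensive.
Import Order.TTheory GRing.Theory Num.Theory.
Local Open Scope ring_scope.

(* The polynomial t^n - sum_{i in M} t^i ; M is given as a duplicate-free list. *)
Definition Ppoly (R : nzRingType) (n : nat) (M : seq nat) : {poly R} :=
  'X^n - \sum_(i <- M) 'X^i.

Definition admissible (n : nat) (M : seq nat) : bool :=
  [&& (0 < n)%N, uniq M, 0%N \in M & all (fun j => (j.*2 <= n.-1)%N) M].

(* Main.v *)
Require Import Defs.
From HB Require Import structures.
From mathcomp Require Import all_boot all_order all_algebra.
Import Order.TTheory GRing.Theory Num.Theory.
Local Open Scope ring_scope.

Lemma hornerP (R : rcfType) n M (x : R) :
  (Ppoly R n M).[x] = x ^+ n - \sum_(i <- M) x ^+ i.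
Proof.
rewrite /Ppoly hornerD hornerN hornerXn horner_sum.
by congr (_ - _); apply: eq_bigr => i _; rewrite hornerXn.
Qed.

Lemma rootPP (R : rcfType) n M (x : R) :
  root (Ppoly R n M) x = (x ^+ n == \sum_(i <- M) x ^+ i).
Proof. by rewrite rootE hornerP subr_eq0. Qed.

Lemma sumM (R : rcfType) (x : R) (M : seq nat) k :
  0 <= x -> uniq M -> all (fun j => (j < k)%N) M ->
  \sum_(i <- M) x ^+ i <= \sum_(i < k) x ^+ i.
Proof.
move=> x0 uM aM.
rewrite -(big_mkord xpredT) [X in _ <= X](bigID (mem M)) /=.
apply: ler_wpDr; first by apply: sumr_ge0 => i _; apply: exprn_ge0.
rewrite (perm_big [seq i <- index_iota 0 k | i \in M]) ?big_filter //.
apply: uniq_perm.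
- by [].
- by rewrite filter_uniq // iota_uniq.
move=> i; rewrite mem_filter mem_iota /= subn0.
case iM: (i \in M) => //=.
by move/allP: aM => /(_ i iM).
Qed.

Lemma keyK (R : rcfType) (n k : nat) (x y : R) :
  (0 < k)%N -> (k <= n)%N -> 0 < y -> y < x ->
  y ^+ n = \sum_(i < k) y ^+ i -> \sum_(i < k) x ^+ i < x ^+ n.
Proof.
move=> k0 kn y0 yx hy.
have x0 : 0 < x by apply: lt_trans yx.
have yn0 : 0 < y ^+ n by apply: exprn_gt0.
have H : y ^+ n * \sum_(i < k) x ^+ i < x ^+ n * \sum_(i < k) y ^+ i.
  rewrite !mulr_sumr; apply: ltr_sum.
    by apply/hasP; exists (Ordinal k0); rewrite ?mem_index_enum.
  move=> i _.
  have iln : (i <= n)%N by apply: leq_trans (ltnW (ltn_ord i)) kn.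
  rewrite -(subnKC iln) !exprD.
  rewrite mulrC -mulrA mulrCA [x ^+ i * _]mulrC -mulrA.
  rewrite mulrA [x ^+ (n - i) * _]mulrC ltr_pM2l; last first.
    by rewrite mulr_gt0 // exprn_gt0.
  rewrite ltrXn2r ?ltW // subn_eq0 -ltnNge.
  by apply: leq_trans (ltn_ord i) kn.
rewrite -hy mulrC ltr_pM2r // in H.
Qed.

Lemma sum_iota (R : rcfType) (x : R) k :
  \sum_(i <- iota 0 k) x ^+ i = \sum_(i < k) x ^+ i.
Proof. by rewrite -(big_mkord xpredT) /index_iota subn0. Qed.

Lemma big2 (R : rcfType) (x : R) k : 2 <= x -> \sum_(i < k) x ^+ i < x ^+ k.
Proof.
move=> x2; elim: k => [|k IH]; first by rewrite big_ord0 expr0 ltr01.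
rewrite big_ord_recr /= exprS.
apply: (lt_le_trans (y := x ^+ k + x ^+ k)); first by rewrite ltrD2r.
rewrite -mulr2n -mulr_natl ler_wpM2r // exprn_ge0 //.
by apply: le_trans x2; rewrite ler0n.
Qed.

Lemma half_bound n : (0 < n)%N -> (((n.-1)./2).+1 <= n)%N /\ (((n.-1)./2).*2.+1 <= n)%N.
Proof.
move=> n0.
have h : (((n.-1)./2).*2 <= n.-1)%N.
  by rewrite -{2}(odd_double_half n.-1) leq_addl.
have h2 : (((n.-1)./2).*2.+1 <= n)%N by rewrite -(prednK n0) ltnS.
split=> //; apply: leq_trans h2; rewrite ltnS -addnn leq_addr //.
Qed.

Lemma adm_all n M : admissible n M -> all (fun j => (j < ((n.-1)./2).+1)%N) M.
Proof.
case/and4P=> _ _ _ /allP aM; apply/allP=> j /aM hj.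
by rewrite ltnS -(doubleK j) half_leq.
Qed.

Lemma root_le_sum (R : rcfType) n M (x : R) : admissible n M -> 0 < x ->
  root (Ppoly R n M) x -> x ^+ n <= \sum_(i < ((n.-1)./2).+1) x ^+ i.
Proof.
move=> adm x0; rewrite rootPP => /eqP ->; apply: sumM; first exact: ltW.
  by case/and4P: adm.
exact: adm_all.
Qed.

Lemma exQ (R : rcfType) n k : (0 < k)%N -> (k <= n)%N ->
  exists y : R, 0 < y /\ root (Ppoly R n (iota 0 k)) y.
Proof.
move=> k0 kn.
have n0 : (0 < n)%N by apply: leq_trans kn.
have h1 : (0 : R) <= 2 by rewrite ler0n.
have h2 : (Ppoly R n (iota 0 k)).[0] <= 0 <= (Ppoly R n (iota 0 k)).[2].
  rewrite !hornerP !sum_iota; apply/andP; split.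
    rewrite expr0n eqn0Ngt n0 /= sub0r oppr_le0.
    by apply: sumr_ge0 => i _; rewrite exprn_ge0.
  rewrite subr_ge0; have hb := ltW (@big2 R 2 k (lexx (2:R))).
  have he : (2:R) ^+ k <= 2 ^+ n by apply: ler_weXn2l => //; rewrite ler1n.
  exact: le_trans hb he.
have [y /andP [y0 y2] ry] := poly_ivt h1 h2.
exists y; split => //.
rewrite lt_neqAle y0 andbT; apply/eqP => y0'.
move: ry; rewrite rootE hornerP sum_iota -y0' expr0n eqn0Ngt n0 /= sub0r oppr_eq0.
rewrite -(prednK k0) big_ord_recl expr0 /=.
apply/negP; rewrite gt_eqF //; apply: ltr_pwDl; first exact: ltr01.
by apply: sumr_ge0 => i _; rewrite exprn_ge0.
Qed.

Lemma root3 (R : rcfType) (s : R) :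
  root (Ppoly R 3 [:: 0; 1]%N) s = (s ^+ 3 == 1 + s).
Proof.
by rewrite rootPP !big_cons big_nil expr0 expr1 addr0.
Qed.

Lemma root3_pos (R : rcfType) (s : R) : root (Ppoly R 3 [:: 0; 1]%N) s -> 0 < s.
Proof.
rewrite root3 => /eqP e; rewrite ltNge; apply/negP => s0.
have [sm1|sm1] := lerP s (-1).
  have : s ^+ 3 <= s.
    rewrite exprS -[X in _ <= X]mulr1 ler_wnM2l //.
    by rewrite -sqrrN exprn_ege1 // lerNr.
  by rewrite e -[X in _ <= X]add0r lerD2r ler10.
have : s ^+ 3 <= 0 by rewrite exprS mulr_le0_ge0 // exprn_even_ge0.
have h : 0 < 1 + s by rewrite addrC -[1]opprK subr_gt0.
by rewrite e leNgt h.
Qed.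

Lemma s2 (R : rcfType) (x : R) : \sum_(i < 2) x ^+ i = 1 + x.
Proof. by rewrite big_ord_recr big_ord_recr big_ord0 /= expr0 expr1 add0r. Qed.

Lemma root3_uniq (R : rcfType) (s t : R) :
  root (Ppoly R 3 [:: 0; 1]%N) s -> root (Ppoly R 3 [:: 0; 1]%N) t -> s = t.
Proof.
move=> rs rt; have s0 := @root3_pos _ _ rs; have t0 := @root3_pos _ _ rt.
move: rs rt; rewrite !root3 => /eqP es /eqP et.
have [st|ts|//] := ltgtP s t.
  have := @keyK R 3 2 t s isT isT s0 st; rewrite !s2 => /(_ es).
  by rewrite et ltxx.
have := @keyK R 3 2 s t isT isT t0 ts; rewrite !s2 => /(_ et).
by rewrite es ltxx.
Qed.

Lemma root3_gt1 (R : rcfType) (t : R) : root (Ppoly R 3 [:: 0; 1]%N) t -> 1 < t.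
Proof.
move=> rt; have t0 := @root3_pos _ _ rt; move: rt; rewrite root3 => /eqP e.
rewrite ltNge; apply/negP => t1.
have : t ^+ 3 <= t.
  rewrite exprS -[X in _ <= X]mulr1 ler_wpM2l //; first exact: ltW.
  exact: exprn_ile1 (ltW t0) t1.
by rewrite e -[X in _ <= X]add0r lerD2r ler10.
Qed.

Lemma root5 (R : rcfType) (t : R) :
  root (Ppoly R 3 [:: 0; 1]%N) t -> root (Ppoly R 5 [:: 0; 1; 2]%N) t.
Proof.
rewrite root3 rootPP => /eqP e.
rewrite !big_cons big_nil expr0 expr1 addr0.
have -> : (5 = 2 + 3)%N by [].
by rewrite exprD e mulrDr mulr1 -exprSr e addrC -addrA.
Qed.

Lemma bigC (R : rcfType) (t x : R) : root (Ppoly R 3 [:: 0; 1]%N) t -> t < x ->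
  forall m, \sum_(i < m.+1) x ^+ i < x ^+ (m.*2.+1).
Proof.
move=> rt tx; have t1 := @root3_gt1 _ _ rt; have t0 := @root3_pos _ _ rt.
have x1 : 1 < x by apply: lt_trans tx.
have x0 : 0 < x by apply: lt_trans x1; exact: ltr01.
have h3 : 1 + x < x ^+ 3.
  move: rt; rewrite root3 => /eqP e.
  have := @keyK R 3 2 x t isT isT t0 tx; rewrite !s2; exact.
case=> [|m]; first by rewrite big_ord_recr big_ord0 /= add0r expr0 expr1.
elim: m => [|m IH]; first by rewrite s2.
rewrite big_ord_recr /=.
apply: (lt_le_trans (y := x ^+ (m.+1.*2.+1) + x ^+ m.+2)); first by rewrite ltrD2r.
have -> : (m.+1.*2.+1 = m.+2 + m.+1)%N by rewrite -addnn !addSn !addnS.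
have -> : (m.+2.*2.+1 = m.+2 + m.+3)%N by rewrite -addnn !addSn !addnS.
rewrite !exprD -[X in _ + X]mulr1 -mulrDr ler_wpM2l ?exprn_ge0 ?(ltW x0) //.
rewrite -addn3 exprD exprSr.
have hm : 1 <= x ^+ m by apply: exprn_ege1; apply: ltW.
apply: ltW; apply: (le_lt_trans (y := x ^+ m * (1 + x))).
  by rewrite mulrDr mulr1 [X in _ <= X]addrC lerD2l.
by rewrite ltr_pM2l // exprn_gt0.
Qed.

Arguments root_le_sum {R n M x}.
Arguments keyK {R n k x y}.
Arguments bigC {R t x}.
Arguments root3_gt1 {R t}.
Arguments root5 {R t}.
Arguments root3_uniq {R s t}.

Theorem lemma5 (R : rcfType) :
  (forall n : nat, (0 < n)%N ->
     admissible n (iota 0 ((n.-1)./2).+1) /\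
     exists y : R, 0 < y /\ root (Ppoly R n (iota 0 ((n.-1)./2).+1)) y /\
       forall (M : seq nat) (x : R),
         admissible n M -> 0 < x -> root (Ppoly R n M) x -> x <= y)
  /\
  (admissible 3 [:: 0; 1]%N /\ admissible 5 [:: 0; 1; 2]%N /\
   exists tP : R,
     root (Ppoly R 3 [:: 0; 1]%N) tP /\
     (forall s : R, root (Ppoly R 3 [:: 0; 1]%N) s -> s = tP) /\
     root (Ppoly R 5 [:: 0; 1; 2]%N) tP /\
     forall (n : nat) (M : seq nat) (x : R),
       admissible n M -> 0 < x -> root (Ppoly R n M) x -> x <= tP).
Proof.
split.
  move=> n n0; have [hk hk2] := @half_bound n n0.
  have hd : (((n.-1)./2).*2 <= n.-1)%N.
    by rewrite -{2}(odd_double_half n.-1) leq_addl.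
  split.
    rewrite /admissible n0 iota_uniq mem_iota /=; apply/allP => j.
    rewrite mem_iota /= => /andP [_ hj]; move: hj; rewrite add1n ltnS => hj.
    by apply: leq_trans hd; rewrite leq_double.
  have [y [y0 ry]] := @exQ R n ((n.-1)./2).+1 isT hk.
  exists y; split => //; split => // M x adm x0 rx.
  rewrite leNgt; apply/negP => yx.
  have hs := root_le_sum adm x0 rx.
  move: ry; rewrite rootPP sum_iota => /eqP hy.
  have := keyK (ltn0Sn _) hk y0 yx hy.
  by rewrite ltNge hs.
split; first by [].
split; first by [].
have [t [t0 rt]] := @exQ R 3 2 isT isT.
exists t; split => //; split; first by move=> s rs; apply: root3_uniq.
split; first exact: root5.
move=> n M x adm x0 rx; rewrite leNgt; apply/negP => tx.
have n0 : (0 < n)%N by case/and4P: adm.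
have [_ hk2] := @half_bound n n0.
have hs := root_le_sum adm x0 rx.
have hc := bigC rt tx ((n.-1)./2).
have x1 : 1 <= x by apply: ltW; apply: lt_trans tx; apply: root3_gt1 rt.
have hp : x ^+ ((n.-1)./2).*2.+1 <= x ^+ n by apply: ler_weXn2l.
have := le_lt_trans hs hc.
by rewrite ltNge hp.
Qed.
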